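(* Let $\alpha$ be a nonzero algebraic number of degree $k\ge2$, let $K$ be the Galois closure of $\mathbb{Q}(\alpha)$ and $d=[K:\mathbb{Q}]$. Let $q$ be a positive integer. If $\mathrm{Tr}_{K/\mathbb{Q}}(\alpha^j)\in\frac1q\mathbb{Z}$ for all $j=1,2,\dots,d+d\lfloor\log_2(qd)\rfloor+1$, then $\alpha$ is an algebraic integer.
   Context: $\mathrm{Tr}_{K/\mathbb{Q}}$ is the field trace and $\lfloor\cdot\rfloor$ the integer part. *)

(* Defs.v *)
From HB Require Import structures.
From mathcomp Require Import all_boot all_order all_algebra all_field.
Set Implicit Arguments. Unset Strict Implicit. Unset Printing Implicit Defensive.
Import GRing.Theory Num.Theory.
Local Open Scope ring_scope.

Definition is_alg_int (L : fieldType) (x : L) : Prop :=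
  exists p : {poly int}, p \is monic /\ root (map_poly (fun z : int => z%:~R) p) x.

Definition in_invq_Z (L : fieldExtType rat) (q : nat) (y : L) : Prop :=
  exists z : int, y = ((z%:~R / q%:R : rat)%:A).

(* Main.v *)
Require Import Defs.
From HB Require Import structures.
From mathcomp Require Import all_boot all_order all_algebra all_field.
From mathcomp Require Import all_fingroup ring lra zify.
Import GRing.Theory Num.Theory.
Local Open Scope ring_scope.
Section Key.
Variable p : nat.
Hypothesis pP : prime p.

Lemma Fp_intr0 (z : int) : ((z%:~R : 'F_p) == 0) = (p %| `|z|)%N.
Proof.
rewrite [z in LHS]intEsign rmorphM rmorphXn /= rmorphN1 mulf_eq0 expf_eq0 oppr_eq0 oner_eq0 andbF /=.
have -> : ((`|z|%N%:Z)%:~R : 'F_p) = (`|z|)%:R by [].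
by rewrite -(inj_eq val_inj) /= val_Fp_nat // /dvdn.
Qed.

Definition phi (Q : {poly int}) : {poly 'F_p} := map_poly (intr : int -> 'F_p) Q.
Local Notation P := ((p%:Z)%:P : {poly int}).

Lemma phiP : phi P = 0.
Proof. by rewrite /phi map_polyC /= -[(p%:Z)%:~R]/(p%:R : 'F_p) pchar_Fp_0 // . Qed.

Lemma phi0_dvd (Q : {poly int}) : phi Q = 0 -> exists Q', Q = P * Q'.
Proof.
move=> h; exists (\poly_(i < size Q) (Q`_i %/ p)%Z); apply/polyP=> i.
rewrite coefCM coef_poly; case: ltnP => hi; last by rewrite mulr0 nth_default.
have : (phi Q)`_i = 0 by rewrite h coef0.
rewrite /phi coef_map /= => /eqP; rewrite Fp_intr0 => hd.
by rewrite mulrC divzK.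
Qed.

Lemma phi_lift (b : {poly 'F_p}) : exists Q, phi Q = b /\ (size Q <= size b)%N.
Proof.
exists (\poly_(i < size b) (Posz (val (b`_i)))); split; last exact: size_poly.
apply/polyP=> i; rewrite /phi coef_map coef_poly /=; case: ltnP => hi.
  exact: natr_Zp.
by rewrite nth_default.
Qed.

Lemma phiM Q R : phi (Q * R) = phi Q * phi R. Proof. exact: rmorphM. Qed.
Lemma phiD Q R : phi (Q + R) = phi Q + phi R. Proof. exact: rmorphD. Qed.
Lemma phiB Q R : phi (Q - R) = phi Q - phi R. Proof. exact: rmorphB. Qed.
Lemma phiXn k : phi 'X^k = 'X^k. Proof. exact: map_polyXn. Qed.
Lemma phiPn k : phi (P ^+ k.+1) = 0. Proof. by rewrite /phi rmorphXn /= -/(phi P) phiP expr0n. Qed.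
Lemma phi_coef Q i : (phi Q)`_i = (Q`_i)%:~R. Proof. by rewrite /phi coef_map. Qed.

Lemma IL m n K (z W U E A C V : {poly int}) :
 (0 < n)%N -> (m < K)%N -> W = 'X^m + P * V -> ~~ (p %| `|(U`_0)%R|)%N -> (size E <= m.+1)%N -> z`_0 = 0 ->
 z * W - U * E = P ^+ n * A + 'X^K * C ->
 phi E = 0 /\ phi (z - 'X^(K - m) * C) = 0.
Proof.
case: n => // n _ mK -> U0 sE z0 h.
have := congr1 phi h; rewrite !(phiB, phiD, phiM) phiPn !phiXn phiP mul0r addr0 mul0r add0r.
set w := phi z; set u := phi U; set e := phi E; set c := phi C => h2.
have XK : 'X^K = 'X^m * 'X^(K - m) :> {poly 'F_p} by rewrite -exprD subnKC // ltnW.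
have u0 : u.[0] != 0 by rewrite horner_coef0 phi_coef Fp_intr0.
have cop : coprimep ('X^m) u.
  rewrite coprimep_sym; apply: coprimep_expr.
  by rewrite -['X]subr0 -polyC0 coprimep_XsubC /root u0.
have : ('X^m %| u * e). apply/dvdpP; exists (w - 'X^(K-m) * c).
  have -> : u * e = w * 'X^m - 'X^K * c by rewrite -h2; ring.
  rewrite XK; ring.
rewrite Gauss_dvdpr // => /dvdpP [Q eQ].
have sQ : (size Q <= 1)%N.
  have [->|Q0] := eqVneq Q 0; first by rewrite size_poly0.
  have : (size e <= m.+1)%N by rewrite /e /phi /map_poly (leq_trans (size_poly _ _)).
  rewrite eQ size_mulXn // => H; by rewrite -(addn1 m) leq_add2l in H.
have /size1_polyC eQ2 := sQ.
set c0 := Q`_0 in eQ2.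
have h3 : w - 'X^(K-m) * c = c0 *: u.
  apply: (@mulfI _ ('X^m)); first by rewrite monic_neq0 ?monicXn.
  by rewrite mulrBr mulrA -XK -h2 eQ eQ2 -mul_polyC; ring.
have h4 : c0 * u.[0] = 0.
  have := congr1 (fun Q => Q.[0]) h3; rewrite /= hornerZ hornerD hornerN hornerM hornerXn.
  rewrite horner_coef0 /w phi_coef z0 expr0n subn_eq0 leqNgt mK /= => <-; by rewrite mul0r subr0 mulr0z.
have c00 : c0 = 0 by move: h4 => /eqP; rewrite mulf_eq0 (negbTE u0) orbF => /eqP.
split; first by rewrite eQ eQ2 c00 mul0r.
by rewrite /phi rmorphN rmorphM /= map_polyXn -/(phi C) -/c h3 c00 scale0r.
Qed.

Lemma P_neq0 : P != 0.
Proof. by rewrite polyC_eq0 -lt0n prime_gt0. Qed.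

Lemma IT m (W U V : {poly int}) : W = 'X^m + P * V -> ~~ (p %| `|(U`_0)%R|)%N ->
  forall i n K (z E A C : {poly int}), (i < n)%N -> (m * i.+1 < K)%N -> (size E <= m.+1)%N ->
  z`_0 = 0 -> z * W - U * E = P ^+ n * A + 'X^K * C -> (p ^ i.+1 %| `|(E`_m)%R|)%N.
Proof.
move=> eW U0; elim=> [|i IH] n K z E A C iln mK sE z0 h.
  have mK' : (m < K)%N by rewrite muln1 in mK.
  have [/phi0_dvd [E' ->] _] := IL _ _ _ _ _ _ _ _ _ _ iln mK' eW U0 sE z0 h.
  by rewrite coefCM abszM /= expn1 dvdn_mulr.
case: n iln h => // n iln h.
have mK' : (m < K)%N by apply: leq_ltn_trans mK; rewrite leq_pmulr.
have [/phi0_dvd [E' eE] /phi0_dvd [z' ez]] := IL _ _ _ _ _ _ _ _ _ _ (ltn0Sn _) mK' eW U0 sE z0 h.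
have XK : 'X^K = 'X^(K-m) * 'X^m :> {poly int} by rewrite -exprD subnK // ltnW.
have ez2 : z = P * z' + 'X^(K-m) * C by rewrite -ez; ring.
have eq1 : P * (z' * W - U * E' - P ^+ n * A) = 'X^(K-m) * ('X^m * C - C * W).
  transitivity ((z * W - U * E) - (P ^+ n.+1 * A + 'X^K * C) + 'X^(K-m) * ('X^m * C - C * W)).
    rewrite ez2 eE XK exprS; ring.
  by rewrite h subrr add0r.
have : phi ('X^(K-m) * ('X^m * C - C * W)) = 0 by rewrite -eq1 phiM phiP mul0r.
move/eqP; rewrite phiM mulf_eq0 phiXn => /orP[]; first by rewrite (negbTE (monic_neq0 (monicXn _ _))).
move=> /eqP/phi0_dvd [H' eH].
have h' : z' * W - U * E' = P ^+ n * A + 'X^(K-m) * H'.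
  apply: (mulfI P_neq0); transitivity (P * (z' * W - U * E' - P ^+ n * A) + P * (P ^+ n * A)); first ring.
  rewrite eq1 eH; ring.
have z'0 : z'`_0 = 0.
  have := congr1 (fun Q : {poly int} => Q`_0) ez; rewrite /= coefB coefXnM z0 coefCM.
  rewrite subn_gt0 mK' subrr => /esym/eqP; rewrite mulf_eq0 => /orP[|/eqP //].
  by move=> /eqP [] p0; move: (prime_gt0 pP); rewrite p0.
have sE' : (size E' <= m.+1)%N by rewrite eE size_Cmul ?polyC_eq0 -?lt0n ?prime_gt0 in sE.
have mK2 : (m * i.+1 < K - m)%N by rewrite ltn_subRL addnC -mulnSr.
have := IH n (K - m)%N z' E' A H' iln mK2 sE' z'0 h'.
rewrite eE coefCM abszM absz_nat => H; rewrite expnS dvdn_pmul2l ?prime_gt0 //.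
Qed.

Lemma copX m (U : {poly int}) : ~~ (p %| `|(U`_0)%R|)%N -> coprimep ('X^m) (phi U).
Proof.
move=> U0; have u0 : (phi U).[0] != 0 by rewrite horner_coef0 phi_coef Fp_intr0.
rewrite coprimep_sym; apply: coprimep_expr.
by rewrite -['X]subr0 -polyC0 coprimep_XsubC /root u0.
Qed.

Lemma prep m (G : {poly int}) : (forall i, (i < m)%N -> (p %| `|(G`_i)%R|)%N) ->
  ~~ (p %| `|(G`_m)%R|)%N ->
  forall n, exists V U A : {poly int}, [/\ (size V <= m)%N, ~~ (p %| `|(U`_0)%R|)%N &
     G - ('X^m + P * V) * U = P ^+ n.+1 * A].
Proof.
move=> Glow Gm; elim=> [|n [V [U [A [sV U0 eq0]]]]].
  have : phi (take_poly m G) = 0.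
    apply/polyP=> i; rewrite phi_coef coef_take_poly coef0; case: ltnP => hi; last by [].
    by apply/eqP; rewrite Fp_intr0 Glow.
  move=> /phi0_dvd [Vt eVt]; exists 0, (drop_poly m G), Vt; split.
  - by rewrite size_poly0.
  - by rewrite coef_drop_poly add0n.
  by rewrite mulr0 addr0 expr1 -eVt -{1}(poly_take_drop m G); ring.
have [[r s] /= ers] := Bezout_eq1_coprimepP _ _ (copX m _ U0).
set a := phi A; set u := phi U.
set x := (a * s) %% 'X^m; set y := (a * s) %/ 'X^m * u + a * r.
have ea : a = x * u + 'X^m * y.
  have e1 : a = (a * s) * u + a * r * 'X^m.
    by rewrite -[a in LHS]mulr1 -ers; ring.
  have e2 := divp_eq (a * s) ('X^m).
  rewrite {1}e1 {1}e2 /y /x; ring.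
have [X1 [pX1 sX1]] := phi_lift x.
have [Y1 [pY1 _]] := phi_lift y.
have sx : (size x <= m)%N.
  by have := ltn_modp (a * s) ('X^m); rewrite size_polyXn monic_neq0 ?monicXn.
have : phi (A - X1 * U - 'X^m * Y1) = 0 by rewrite !phiB !phiM phiXn pX1 pY1 -/a -/u ea; ring.
move=> /phi0_dvd [A' eA'].
exists (V + P ^+ n * X1), (U + P ^+ n.+1 * Y1), (A' - V * Y1 - P ^+ n * X1 * Y1); split.
- apply: (leq_trans (size_add _ _)); rewrite geq_max sV /=.
  rewrite -rmorphXn size_Cmul; first exact: leq_trans sX1 sx.
  by rewrite expf_neq0 // -lt0n prime_gt0.
- rewrite -Fp_intr0 -phi_coef phiD phiM -/u phiPn mul0r addr0 phi_coef Fp_intr0 //.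
have eG : G = ('X^m + P * V) * U + P ^+ n.+1 * A by rewrite -eq0; ring.
have eA : A = P * A' + X1 * U + 'X^m * Y1 by rewrite -eA'; ring.
rewrite eG eA !exprS; ring.
Qed.

Lemma key (G Y : {poly int}) (M m N : nat) : (0 < M)%N -> (0 < m)%N ->
  (forall i, (i < m)%N -> (p %| `|(G`_i)%R|)%N) -> ~~ (p %| `|(G`_m)%R|)%N ->
  Y`_0 = 0 -> (exists C, Y * G + (M%:Z)%:P * ('X * G^`()) = 'X^(N.+1) * C) ->
  (N < m * (logn p (M * m)).+1)%N.
Proof.
move=> M0 m0 Glow Gm Y0 [C1 eC1]; rewrite ltnNge; apply/negP => hN.
set v := logn p (M * m).
have [V [U [A [sV U0 eq0]]]] := prep _ _ Glow Gm v.
set W := 'X^m + P * V.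
set z := Y * U + (M%:Z)%:P * ('X * U^`()).
set E := - ((M%:Z)%:P * ('X * W^`())).
have eG : G = W * U + P ^+ v.+1 * A by rewrite -eq0 /W; ring.
have dG : G^`() = W^`() * U + W * U^`() + P ^+ v.+1 * A^`().
  by rewrite eG derivD !derivM -rmorphXn derivC mul0r add0r.
have h : z * W - U * E = P ^+ v.+1 * (- (Y * A + (M%:Z)%:P * ('X * A^`()))) + 'X^(N.+1) * C1.
  rewrite -eC1 dG {1}eG /z /E; ring.
have cE j : (0 < j)%N -> E`_j = - (M%:Z * (W`_j *+ j)).
  by case: j => // j _; rewrite /E coefN coefCM coefXM /= coef_deriv.
have cW j : W`_j = (j == m)%:R + p%:Z * V`_j by rewrite /W coefD coefXn coefCM.
have sE : (size E <= m.+1)%N.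
  apply/leq_sizeP => j hj; rewrite cE ?(leq_trans _ hj) // cW.
  rewrite (nth_default 0 (leq_trans sV (leq_trans (leqnSn m) hj))) mulr0 addr0.
  by rewrite gtn_eqF //= mul0rn mulr0 oppr0.
have z0 : z`_0 = 0 by rewrite /z coefD coef0M Y0 mul0r add0r coefCM coefXM mulr0.
have mK : (m * v.+1 < N.+1)%N by rewrite ltnS.
have := IT m W U V (erefl _) U0 v v.+1 N.+1 z E _ C1 (ltnSn v) mK sE z0 h.
rewrite cE // cW eqxx (nth_default 0 sV) mulr0 addr0 abszN.
have -> : `|(M%:Z * (1 *+ m))%R|%N = (M * m)%N by rewrite -[1 *+ m]/(m%:R) natz -PoszM absz_nat.
by rewrite pfactor_dvdn ?muln_gt0 ?M0 ?m0 // ltnn.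
Qed.
End Key.
Section Newton.
Variable R : comNzRingType.

Definition Phi {I : Type} (r : seq I) (f : I -> R) : {poly R} :=
  \prod_(i <- r) (1 - (f i)%:P * 'X).
Definition Spow {I : Type} (r : seq I) (f : I -> R) (J : nat) : {poly R} :=
  \sum_(1 <= k < J.+1) (\sum_(i <- r) f i ^+ k)%:P * 'X^k.

Lemma geo (x : R) J : (\sum_(1 <= k < J.+1) (x ^+ k)%:P * 'X^k) * (1 - x%:P * 'X)
  = x%:P * 'X - (x ^+ J.+1)%:P * 'X^(J.+1).
Proof.
elim: J => [|J IH]; first by rewrite big_geq // mul0r expr1 expr1; ring.
rewrite big_nat_recr //= mulrDl IH !exprS polyCM; ring.
Qed.

Lemma newton (I : Type) (r : seq I) (f : I -> R) J :
  exists Q, Spow r f J * Phi r f + 'X * (Phi r f)^`() = 'X^(J.+1) * Q.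
Proof.
elim: r => [|i r [Q IH]].
  exists 0; rewrite /Spow /Phi big_nil derivC mulr0 addr0 mulr0.
  by rewrite big1 ?mul0r // => k _; rewrite big_nil mul0r.
have eS : Spow (i :: r) f J = \sum_(1 <= k < J.+1) (f i ^+ k)%:P * 'X^k + Spow r f J.
  by rewrite /Spow -big_split /=; apply: eq_bigr => k _; rewrite big_cons polyCD mulrDl.
have eP : Phi (i :: r) f = (1 - (f i)%:P * 'X) * Phi r f by rewrite /Phi big_cons.
exists ((1 - (f i)%:P * 'X) * Q - (f i ^+ J.+1)%:P * Phi r f).
rewrite eS eP !derivE.
transitivity ((\sum_(1 <= k < J.+1) (f i ^+ k)%:P * 'X^k) * (1 - (f i)%:P * 'X) * Phi r f
   + (1 - (f i)%:P * 'X) * (Spow r f J * Phi r f + 'X * (Phi r f)^`()) - (f i)%:P * 'X * Phi r f).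
  ring.
rewrite geo IH; ring.
Qed.
End Newton.
Arguments Spow {R I}. Arguments Phi {R I}. Arguments newton {R I}.
Section Gal.
Variable L : splittingFieldType rat.

Lemma gal_galois : galois 1 {:L}.
Proof.
apply/and3P; split; [exact: sub1v | | exact: normalFieldf].
apply/separableP => y _; apply: pcharf0_separable => n.
by rewrite pchar_lalg pchar_num.
Qed.

Lemma fixed_rat (c : L) : (forall s, s \in 'Gal({:L} / 1)%g -> s c = c) -> c \in 1%VS.
Proof.
move=> h; rewrite -(galois_fixedField gal_galois).
by apply/fixedFieldP; [exact: memvf | exact: h].
Qed.

Variable alpha : L.
Definition PhiL : {poly L} := \prod_(s in 'Gal({:L} / 1)%g) (1 - (s alpha)%:P * 'X).

Lemma PhiL_fixed t : t \in 'Gal({:L} / 1)%g -> map_poly t PhiL = PhiL.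
Proof.
move=> tG; rewrite /PhiL rmorph_prod /=.
rewrite [RHS](reindex_inj (mulIg t)) /=.
apply: eq_big => [s|s _]; first by rewrite groupMr.
by rewrite rmorphB rmorph1 rmorphM /= map_polyC map_polyX /= galM ?memvf.
Qed.


Local Notation GG := ('Gal({:L} / 1)%g).

Lemma PhiL_rat : exists Pq : {poly rat}, PhiL = map_poly (in_alg L) Pq.
Proof.
apply/polyOver1P; apply/polyOverP => i; apply: fixed_rat => t tG.
by rewrite -{2}(PhiL_fixed t tG) coef_map.
Qed.

Lemma PhiL0 : PhiL`_0 = 1.
Proof.
rewrite -horner_coef0 /PhiL horner_prod; apply: big1 => s _.
by rewrite hornerD hornerN hornerM hornerX hornerC hornerC mulr0 subr0.
Qed.

Lemma size_PhiL : (size PhiL <= #|GG|.+1)%N.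
Proof.
apply: leq_trans (size_poly_prod_leq _ _) _.
have : (\sum_(i in GG) size ((1 - (i alpha)%:P * 'X)%R) <= \sum_(i in GG) 2)%N.
  apply: leq_sum => s _; apply: leq_trans (size_polyD _ _) _; rewrite geq_max size_poly1 /=.
  by rewrite size_polyN (leq_trans (size_polyMleq _ _)) // size_polyX size_polyC; case: (_ != 0).
rewrite sum_nat_const => h; rewrite leq_subLR; apply: leq_trans (_ : _ <= (#|GG| * 2).+1)%N _; first exact: h.
by rewrite muln2 -addnn addnS.
Qed.

Lemma PhiL_root : alpha != 0 -> PhiL.[alpha^-1] = 0.
Proof.
move=> a0; rewrite /PhiL horner_prod (bigD1 1%g) ?group1 //=.
by rewrite hornerD hornerN hornerM hornerX hornerC hornerC gal_id mulfV // subrr mul0r.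
Qed.

Lemma newtonL N : exists Q,
  Spow (enum GG) (fun s => s alpha) N * PhiL + 'X * PhiL^`() = 'X^(N.+1) * Q.
Proof.
have [Q eQ] := newton (enum GG) (fun s => s alpha) N.
by exists Q; rewrite -eQ /Phi big_enum.
Qed.

Lemma Spow_coef N k : (Spow (enum GG) (fun s => s alpha) N)`_k =
  if (1 <= k <= N)%N then galTrace 1 {:L} (alpha ^+ k) else 0.
Proof.
rewrite /Spow coef_sum.
have e j : (\sum_(i <- enum GG) i alpha ^+ j) = galTrace 1 {:L} (alpha ^+ j).
  by rewrite big_enum /galTrace; apply: eq_bigr => s _; rewrite rmorphXn.
under eq_bigr => j _ do rewrite coefCM coefXn e.
case: ifP => hk.
  rewrite (bigD1_seq k) ?mem_index_iota ?iota_uniq //=.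
  rewrite big1_seq ?addr0; first by rewrite eqxx mulr1.
  by move=> j /andP[jk _]; rewrite eq_sym (negbTE jk) mulr0.
rewrite big1_seq // => j /andP[_]; rewrite mem_index_iota ltnS => hj.
case: eqP => [ejk|]; last by rewrite mulr0.
by move: hk; rewrite ejk hj.
Qed.

End Gal.
Arguments PhiL {L}. Arguments PhiL_rat {L}. Arguments PhiL0 {L}. Arguments size_PhiL {L}.
Arguments PhiL_root {L}. Arguments newtonL {L}. Arguments Spow_coef {L}. Arguments gal_galois {L}.

Local Notation pZtoQ := (map_poly (intr : int -> rat)).

Lemma Xdiv (R : nzRingType) (Z : {poly R}) N :
  (forall j, (j <= N)%N -> Z`_j = 0) -> exists C, Z = 'X^(N.+1) * C.
Proof.
move=> h; exists (drop_poly N.+1 Z); rewrite -{1}(poly_take_drop N.+1 Z).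
have -> : take_poly N.+1 Z = 0.
  by apply/polyP => j; rewrite coef_take_poly coef0; case: ltnP => // hj; rewrite h.
by rewrite add0r commr_polyXn.
Qed.

Theorem corollary2p11 (L : splittingFieldType rat) (alpha : L) (q : nat) :
  alpha != 0 ->
  (2 <= adjoin_degree 1%VS alpha)%N ->
  splittingFieldFor 1%VS (minPoly 1%VS alpha) fullv ->
  (0 < q)%N ->
  (forall j : nat, (1 <= j <= \dim {:L} + \dim {:L} * trunc_log 2 (q * \dim {:L}) + 1)%N ->
     in_invq_Z q (galTrace 1%VS fullv (alpha ^+ j))) ->
  is_alg_int alpha.
Proof.
move=> a0 _ _ q0 htr.
set d := \dim {:L}.
set N := (d + d * trunc_log 2 (q * d) + 1)%N.
have dG : #|'Gal({:L} / 1)%g| = d.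
  by rewrite -galois_dim ?gal_galois // dimv1 divn1.
have [Pq ePq] := PhiL_rat alpha.
have [Q1 eQ1] := newtonL alpha N.
have [Tq eTq] : exists Tq : {poly rat},
    Spow (enum 'Gal({:L} / 1)%g) (fun s => s alpha) N = map_poly (in_alg L) Tq.
  apply/polyOver1P; apply/polyOverP => i; rewrite Spow_coef; case: ifP => _.
    exact: (mem_galTrace gal_galois (memvf _)).
  exact: rpred0.
have cTq k : exists z : int, q%:R * Tq`_k = z%:~R.
  have := Spow_coef alpha N k; rewrite eTq coef_map /=; case: ifP => hk.
    have [z ->] := htr k hk => /(fmorph_inj (in_alg L)) ->.
    by exists z; rewrite mulrC divfK // pnatr_eq0 -lt0n.
  by rewrite -(rmorph0 (in_alg L)) => /(fmorph_inj (in_alg L)) ->; exists 0; rewrite mulr0.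
pose Y : {poly int} := map_poly (fun r : rat => numq r) (q%:R *: Tq).
have eY : pZtoQ Y = q%:R *: Tq.
  apply/polyP => k; rewrite coef_map /= coef_map_id0 // coefZ.
  by have [z ->] := cTq k; rewrite numq_int.
have Tq0 : Tq`_0 = 0.
  have := Spow_coef alpha N 0; rewrite eTq coef_map /=.
  by rewrite -(rmorph0 (in_alg L)) => /(fmorph_inj (in_alg L)).
have Y0 : Y`_0 = 0 by rewrite coef_map_id0 // coefZ Tq0 mulr0.
have ratN j : (j <= N)%N -> (Tq * Pq + 'X * Pq^`())`_j = 0.
  move=> hj; apply: (fmorph_inj (in_alg L)); rewrite rmorph0 -coef_map rmorphD !rmorphM /=.
  by rewrite map_polyX -deriv_map -eTq -ePq eQ1 coefXnM ltnS hj.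
have [Q0 [a an0 eQ0]] := rat_poly_scale Pq.
have Pq0 : Pq`_0 = 1.
  have : in_alg L Pq`_0 = in_alg L 1 by rewrite rmorph1 -(PhiL0 alpha) ePq coef_map.
  by move/fmorph_inj.
have Q0n0 : Q0 != 0.
  by apply/eqP => Q00; move: Pq0; rewrite eQ0 Q00 rmorph0 scaler0 coef0 => /eqP; rewrite eq_sym oner_eq0.
set G := zprimitive Q0.
set c : rat := (a%:~R)^-1 * (zcontents Q0)%:~R.
have ePG : Pq = c *: pZtoQ G by rewrite eQ0 {1}(zpolyEprim Q0) map_polyZ /= scalerA.
have c0 : c != 0 by rewrite mulf_eq0 invr_eq0 !intr_eq0 negb_or an0 zcontents_eq0 Q0n0.
have cG0 : c * (G`_0)%:~R = 1 by move: Pq0; rewrite ePG coefZ coef_map.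
have [C eC] : exists C, Y * G + (q%:Z)%:P * ('X * G^`()) = 'X^(N.+1) * C.
  apply: Xdiv => j hj; apply/eqP; rewrite -(@intr_eq0 rat) -coef_map.
  have eG : pZtoQ G = c^-1 *: Pq by rewrite ePG scalerA mulVf // scale1r.
  rewrite rmorphD !rmorphM /= map_polyC map_polyX -deriv_map eY eG /=.
  rewrite -!mul_polyC derivM derivC mul0r add0r.
  have -> : (q%:R)%:P * Tq * ((c^-1)%:P * Pq) + (q%:Z%:~R)%:P * ('X * ((c^-1)%:P * Pq^`()))
     = (q%:R * c^-1)%:P * (Tq * Pq + 'X * Pq^`()) by rewrite polyCM; ring.
  by rewrite coefCM ratN // mulr0.
have G0n0 : G`_0 != 0.
  by apply/eqP => h; move: cG0; rewrite h mulr0 => /eqP; rewrite eq_sym oner_eq0.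
have sG : (size G <= d.+1)%N.
  have e1 : size Pq = size G by rewrite ePG size_scale // size_map_inj_poly //; exact: intr_inj.
  have e2 : size (PhiL alpha) = size Pq by rewrite ePq size_map_poly.
  by rewrite -e1 -e2 -dG; exact: size_PhiL.
case: (ltnP 1 (absz (G`_0)%R)) => hG0.
  exfalso.
  set p := pdiv (absz (G`_0)%R).
  have pP : prime p := pdiv_prime hG0.
  have pG0 : (p %| (absz (G`_0)%R))%N := pdiv_dvd _.
  have nd : ~~ (G \is a polyOver (dvdz p)).
    rewrite -dvdz_contents zcontents_primitive Q0n0 /=.
    apply/negP; rewrite /dvdz unfold_in /= dvdn1 => /eqP p1; by rewrite p1 in pP.
  have [i hi] : exists i, ~~ (p %| (absz (G`_i)%R))%N.
    case: (boolP [exists i : 'I_(size G), ~~ (p %| (absz (G`_i)%R))%N]) => [/existsP [i hi]|/existsPn hall].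
      by exists i.
    case/negP: nd; apply/polyOverP => j; case: (ltnP j (size G)) => hj.
      by have := hall (Ordinal hj); rewrite negbK.
    by rewrite nth_default //; exact: dvdz0.
  have exP : exists n : nat, (fun n => ~~ (p %| (absz (G`_n)%R))%N) n by exists i.
  case: (ex_minnP exP) => m hm mmin.
  have m0 : (0 < m)%N by rewrite lt0n; apply/eqP => m00; move: hm; rewrite m00 pG0.
  have Glow k : (k < m)%N -> (p %| (absz (G`_k)%R))%N.
    by move=> km; apply/negPn/negP => hk; have := mmin k hk; rewrite leqNgt km.
  have mG : (m < size G)%N.
    by rewrite ltnNge; apply/negP => hs; move: hm; rewrite nth_default // dvdn0.
  have := key p pP G Y q m N q0 m0 Glow hm Y0 (ex_intro _ C eC).
  set v := logn p (q * m).
  have md : (m <= d)%N by rewrite -ltnS (leq_trans mG sG).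
  have pv : (p ^ v <= q * m)%N.
    by apply: dvdn_leq; [rewrite muln_gt0 q0 m0 | rewrite pfactor_dvdn ?muln_gt0 ?q0 ?m0].
  have v2 : (2 ^ v <= p ^ v)%N.
    by case: (v) => [|v']; rewrite // leq_exp2r // prime_gt1.
  have vt : (v <= trunc_log 2 (q * d))%N.
    apply: trunc_log_max => //; apply: leq_trans v2 _; apply: leq_trans pv _.
    by rewrite leq_mul2l md orbT.
  rewrite /N; apply/negP; rewrite -leqNgt.
  apply: (@leq_trans (d * (trunc_log 2 (q * d)).+1)); first exact: leq_mul.
  by rewrite mulnS addn1.
have eG0 : G`_0 = 1 \/ G`_0 = -1.
  by move: hG0 G0n0; case: (G`_0) => [[|[|n]]|[|n]] //=; auto.
set e := G`_0 in eG0 cG0 G0n0.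
have ee : e * e = 1 by case: eG0 => ->.
have E2 : (e%:~R : rat) * e%:~R = 1 by rewrite -intrM ee.
have ce : c = e%:~R by rewrite -[c]mulr1 -{1}E2 mulrA cG0 mul1r.
set H := e *: G.
have ePH : Pq = pZtoQ H by rewrite ePG /H map_polyZ /= ce.
have H0 : H`_0 = 1 by rewrite coefZ ee.
have ePhi : PhiL alpha = map_poly (intr : int -> L) H.
  rewrite ePq ePH -map_poly_comp; apply: eq_map_poly => z /=; exact: (rmorph_int (in_alg L)).
have sH : (size H <= d.+1)%N by rewrite /H size_scale ?sG.
exists (\poly_(i < d.+1) H`_(d - i)); split.
  rewrite monicE lead_coefE size_poly_eq; last by rewrite subnn H0 oner_eq0.
  by rewrite coef_poly /= ltnSn subnn H0.
rewrite /root; apply/eqP.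
have hr := PhiL_root alpha a0.
rewrite ePhi (@horner_coef_wide _ d.+1) in hr; last first.
  by rewrite /map_poly (leq_trans (size_poly _ _)).
rewrite (@horner_coef_wide _ d.+1); last first.
  by rewrite /map_poly (leq_trans (size_poly _ _)) // size_poly.
transitivity (alpha ^+ d * \sum_(i < d.+1) (map_poly (intr : int -> L) H)`_i * alpha^-1 ^+ i);
  last by rewrite hr mulr0.
rewrite big_distrr (reindex_inj rev_ord_inj) /=; apply: eq_bigr => i _.
have id : (i <= d)%N by rewrite -ltnS.
rewrite !coef_map /= coef_poly subSS ltnS leq_subr subKn //.
have ei : alpha ^+ d = alpha ^+ (d - i) * alpha ^+ i by rewrite -exprD subnK.
by rewrite ei -mulrA [alpha ^+ i * _]mulrCA exprVn mulfV ?expf_neq0 // mulr1 mulrC.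
Qed.
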